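(* If $k$ is odd, then $f(n,k)\ge\left(1-\frac{4}{(k+1)^2}+o(1)\right)\binom{n}{3}$, where $o(1)\to0$ as $n\to\infty$ with $k$ fixed.
   Context: Let $K^{(2)}_n$ be the complete graph on $[n]$ with the natural order. A $k$-edge-labeling $\phi$ of $K^{(2)}_n$ assigns to each pair $uv$ a label from a fixed linearly ordered set of size $k$. A triple $u<v<w$ is good if $\phi(uv)<\phi(vw)$, and bad otherwise. $f(n,k)$ is the maximum, over all $k$-edge-labelings of $K^{(2)}_n$, of the number of good triples. *)

(* Defs.v *)
From mathcomp Require Import all_boot all_order all_algebra.
Set Implicit Arguments. Unset Strict Implicit. Unset Printing Implicit Defensive.

(* A k-edge-labeling is given by its values on the
   ordered pairs (u,v) with u < v; values on other pairs are irrelevant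
   (never read), so maximizing over all such functions gives f(n,k). *)
Definition labeling (n k : nat) := {ffun 'I_n * 'I_n -> 'I_k}.

Definition good_triples (n k : nat) (phi : labeling n k) : nat :=
  #|[set t : 'I_n * 'I_n * 'I_n |
       [&& (t.1.1 < t.1.2)%N, (t.1.2 < t.2)%N &
           (phi (t.1.1, t.1.2) < phi (t.1.2, t.2))%N]]|.

Definition f (n k : nat) : nat := \max_(phi : labeling n k) good_triples phi.

(* Main.v *)
Require Import Defs.
From mathcomp Require Import all_boot all_order all_algebra.
From mathcomp Require Import zify ring lra.
Import Order.TTheory GRing.Theory Num.Theory.

Lemma card_T n : 'C(n,3) <= #|[set t : 'I_n * 'I_n * 'I_n | (t.1.1 < t.1.2 < t.2)%N]|.
Proof.
rewrite -card_ltn_sorted_tuples.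
pose F (t : 3.-tuple 'I_n) := (tnth t (@Ordinal 3 0 isT), tnth t (@Ordinal 3 1 isT), tnth t (@Ordinal 3 2 isT)).
have Finj : injective F.
  move=> t1 t2; case/tupleP: t1 => a1 t1; case/tupleP: t1 => b1 t1; case/tupleP: t1 => c1 t1.
  case/tupleP: t2 => a2 t2; case/tupleP: t2 => b2 t2; case/tupleP: t2 => c2 t2.
  rewrite [t1]tuple0 [t2]tuple0 /F /tnth /= => -[-> -> ->].
  by apply: val_inj.
rewrite -(card_imset _ Finj); apply: subset_leq_card; apply/subsetP => x /imsetP [t].
rewrite inE; case/tupleP: t => a t; case/tupleP: t => b t; case/tupleP: t => c t.
rewrite [t]tuple0 /F /tnth /= => /andP [hab /andP [hbc _]] ->.
by rewrite inE /= hab hbc.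
Qed.

Lemma card_Bd n m' s' (Hn : n <= m'.+1 * s'.+1) :
  #|[set t : 'I_n * 'I_n * 'I_n | (t.1.1 < t.1.2 < t.2)%N && (t.1.1 %/ s'.+1 == t.2 %/ s'.+1)]| <= m'.+1 * 'C(s'.+1, 3).
Proof.
set s := s'.+1; set m := m'.+1.
have blk (x : 'I_n) : x %/ s <= m'.
  by rewrite -ltnS ltn_divLR //; apply: leq_trans (ltn_ord x) _.
have md (x : 'I_n) : x %% s <= s' by rewrite -ltnS ltn_mod.
rewrite -[m in m * _]card_ord -card_ltn_sorted_tuples -cardsT -cardsX.
pose h (t : 'I_n * 'I_n * 'I_n) : 'I_m * 3.-tuple 'I_s :=
  (inord (t.1.1 %/ s), [tuple inord (t.1.1 %% s); inord (t.1.2 %% s); inord (t.2 %% s)]).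
have mid (u v w : 'I_n) : u <= v -> v <= w -> u %/ s = w %/ s -> v %/ s = u %/ s.
  move=> uv vw uw; apply/eqP; rewrite eqn_leq; apply/andP; split; last exact: leq_div2r.
  by rewrite uw leq_div2r.

have dm (x y : 'I_n) : x %/ s = y %/ s -> x %% s = y %% s -> x = y.
  by move=> e1 e2; apply: val_inj; rewrite /= (divn_eq x s) (divn_eq y s) e1 e2.
rewrite -(card_in_imset (f:=h)).
- apply: subset_leq_card; apply/subsetP => x /imsetP [[[u v] w]].
  rewrite inE /= => /andP [/andP [h1 h2] /eqP hb] ->.
  have e1 := mid u v w (ltnW h1) (ltnW h2) hb.
  rewrite !inE /= !inordK ?ltn_mod //.
  have lt (x1 y : 'I_n) : x1 < y -> x1 %/ s = y %/ s -> x1 %% s < y %% s.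
    move=> xy e; rewrite -(ltn_add2l (x1 %/ s * s)).
    by rewrite -divn_eq e -divn_eq.
  by rewrite (lt u v) // ?(lt v w) // e1.
- move=> [[u1 v1] w1] [[u2 v2] w2]; rewrite !inE /=.
  move=> /andP [/andP [a1 b1] /eqP c1] /andP [/andP [a2 b2] /eqP c2].
  move=> e.
  have eb := congr1 (fun p => val p.1) e.
  have et := congr1 (fun p => map val (val p.2)) e.
  move: eb et; rewrite /h /= !inordK ?ltn_mod ?ltnS ?blk // => eb [eu ev ew].
  have ev1 := mid u1 v1 w1 (ltnW a1) (ltnW b1) c1.
  have ev2 := mid u2 v2 w2 (ltnW a2) (ltnW b2) c2.
  rewrite (dm u1 u2) // (dm v1 v2) ?ev1 ?ev2 // (dm w1 w2) // -c1 -c2 //.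
Qed.

Lemma construct n m' s' (Hn : n <= m'.+1 * s'.+1) :
  'C(n,3) <= f n (m'.*2.+1) + m'.+1 * 'C(s'.+1,3).
Proof.
set s := s'.+1.
pose phi : labeling n (m'.*2.+1) := [ffun p : 'I_n * 'I_n => inord (p.1 %/ s + p.2 %/ s)].
have blk (x : 'I_n) : x %/ s <= m'.
  by rewrite -ltnS ltn_divLR //; apply: leq_trans (ltn_ord x) _.
have phiE (x y : 'I_n) : phi (x,y) = x %/ s + y %/ s :> nat.
  by rewrite ffunE inordK // ltnS -addnn leq_add.
apply: leq_trans (card_T n) _.
apply: leq_trans (_ : _ <= good_triples phi + #|[set t : 'I_n * 'I_n * 'I_n | (t.1.1 < t.1.2 < t.2)%N && (t.1.1 %/ s'.+1 == t.2 %/ s'.+1)]|) _; last first.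
  apply: leq_add; last exact: card_Bd.
  by rewrite /f; apply: (@leq_bigmax _ (fun phi0 : labeling n (m'.*2.+1) => good_triples phi0) phi).
rewrite /good_triples -cardsUI; apply: leq_trans (leq_addr _ _).
apply: subset_leq_card; apply/subsetP => [[[u v] w]]; rewrite !inE /= => /andP [uv vw].
rewrite uv vw /= !phiE.
have h1 : u %/ s <= v %/ s by apply: leq_div2r; apply: ltnW.
have h2 : v %/ s <= w %/ s by apply: leq_div2r; apply: ltnW.
apply/orP; case: (eqVneq (u %/ s) (w %/ s)) => [e|ne]; [right; exact/eqP | left]. lia.
Qed.

Lemma bin3 p : 'C(p.+3, 3) * 6 = p.+3 * p.+2 * p.+1.
Proof. rewrite (bin_ffact p.+3 3) !ffactnS ffactn0 /=; lia. Qed.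

Lemma binq q : 'C(q.+1, 3) * 6 = q.+1 * q * q.-1.
Proof. rewrite (bin_ffact q.+1 3) !ffactnS ffactn0 /=; lia. Qed.

Theorem proposition4p2 (k : nat) : odd k ->
  forall eps : rat, (0 < eps)%R ->
  exists N : nat, forall n : nat, (N <= n)%N ->
    ((1 - 4 / ((k.+1)%:R ^+ 2) - eps) * ('C(n, 3))%:R <= (f n k)%:R :> rat)%R.
Proof.
move=> ko eps eps0.
have -> : k = (k./2).*2.+1 by rewrite -[k in LHS]odd_double_half ko add1n.
move: (k./2) => m'; set m := m'.+1.
exists (Num.bound ((m%:R + 2) / eps)).+3 => n hn.
have [p ?] : exists p, n = p.+3 by exists (n - 3); lia.
subst n.
set q := p.+3 %/ m.
have Hn : p.+3 <= m * q.+1.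
  rewrite /q; have := ltn_pmod p.+3 (ltn0Sn m'); rewrite {1}(divn_eq p.+3 m); fold m; lia.
have H0 := @construct _ _ _ Hn.
have hB : m ^ 3 * ('C(q.+1, 3) * 6) <= (p.+3 + m) * p.+3 * p.+2.
  rewrite binq.
  have e1 : m * q <= p.+3 by rewrite mulnC /q leq_divM.
  have e2 : m * q.+1 <= p.+3 + m by lia.
  have e3 : m * q.-1 <= p.+2 by rewrite -subn1 mulnBr; lia.
  have := leq_mul (leq_mul e2 e1) e3.
  apply: leq_trans; rewrite leq_eqVlt; apply/orP; left; apply/eqP; ring.
have hc := bin3 p.
have hb : (Num.bound ((m%:R + 2) / eps)%R <= p)%N by lia.
have Mpos : (1 <= m%:R :> rat)%R by rewrite ler1n.
have heps : (m%:R + 2 <= eps * (p%:R + 1) :> rat)%R.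
  have := @archi_boundP _ ((m%:R + 2) / eps).
  rewrite ltr_pdivrMr // => h.
  have {}h : (m%:R + 2 < (Num.bound ((m%:R + 2) / eps))%:R * eps :> rat)%R.
    apply: h; apply: divr_ge0; last exact: ltW.
    by apply: addr_ge0; rewrite ?ler0n.
  have hb' : ((Num.bound ((m%:R + 2) / eps))%:R <= p%:R + 1 :> rat)%R.
    by rewrite natr1 ler_nat; lia.
  have := ler_wpM2r (ltW eps0) hb'; rewrite [(eps * _)%R]mulrC; lra.
have hB' : (m ^ 3 * ('C(q.+1, 3) * 6) <= (p + 3 + m) * (p + 3) * (p + 2))%N.
  by apply: leq_trans hB _; rewrite !addn3 !addn2.
have hc' : ('C(p.+3, 3) * 6 = (p + 3) * (p + 2) * (p + 1))%N by rewrite hc addn3 addn2 addn1.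
move: H0 hB' hc'; rewrite -/m.
move: ('C(p.+3, 3)) ('C(q.+1, 3)) (f p.+3 m'.*2.+1) => cn Cn gn.
rewrite -(ler_nat rat) -(ler_nat rat) => H0r hBr /(congr1 (fun x => x%:R : rat)%R) hcr.
move: H0r hBr hcr; rewrite !(natrM, natrD, natrX).
Local Open Scope ring_scope.
have -> : ((m'.*2.+1).+1%:R = 2 * m%:R :> rat)%R by rewrite -natrM; apply/eqP; rewrite eqr_nat; apply/eqP; lia.
set M := m%:R; set P := p%:R => H0r hBr hcr.
set c := (cn%:R : rat); set C := (Cn%:R : rat); set g := (gn%:R : rat).
have P0 : (0 <= P)%R by rewrite ler0n.
have C0 : (0 <= C)%R by rewrite ler0n.
have c0 : (0 <= c)%R by rewrite ler0n.
have M0 : M != 0 by rewrite pnatr_eq0.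
have key : (M * C <= c / M ^+ 2 + eps * c)%R.
  have h6 : (0 < M ^+ 2 * 6 :> rat)%R by rewrite mulr_gt0 // exprn_gt0 //; lra.
  rewrite -(ler_pM2l h6).
  have -> : (M ^+ 2 * 6 * (c / M ^+ 2 + eps * c) = c * 6 + M ^+ 2 * eps * (c * 6))%R by field.
  have -> : (M ^+ 2 * 6 * (M * C) = M ^+ 3 * (C * 6))%R by ring.
  apply: le_trans hBr _; rewrite hcr.
  set Z := ((P + 3) * (P + 2))%R.
  have Z0 : (0 <= Z)%R by rewrite /Z; nra.
  have h1 : ((M + 2) * Z <= eps * (P + 1) * Z)%R by nra.
  have h2 : (eps * (P + 1) * Z <= M ^+ 2 * eps * (P + 1) * Z)%R.
    have : (0 <= eps * (P + 1) * Z)%R by apply: mulr_ge0 => //; nra.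
    have : (1 <= M ^+ 2)%R by rewrite expr_ge1 //; lra.
    nra.
  have -> : ((P + 3 + M) * (P + 3) * (P + 2) = (P + 3) * (P + 2) * (P + 1) + (M + 2) * Z)%R by rewrite /Z; ring.
  have -> : (M ^+ 2 * eps * ((P + 3) * (P + 2) * (P + 1)) = M ^+ 2 * eps * (P + 1) * Z)%R by rewrite /Z; ring.
  rewrite -/Z; lra.
have -> : (4 / (2 * M) ^+ 2 = 1 / M ^+ 2 :> rat)%R by field.
have -> : ((1 - 1 / M ^+ 2 - eps) * c = c - c / M ^+ 2 - eps * c)%R by field.
move: H0r; rewrite -/c -/C -/g => H0r.
set d := (c / M ^+ 2)%R in key *.
lra.
Qed.
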